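(* For all integers $i,j,m\ge0$, $$\overline{\mathfrak{C}}_{ijm}=\frac{(i+j-m+2)(i-j+m+2)(-i+j+m+2)(i+j+m+6)}{4\sqrt{2\pi(i+1)(i+3)(j+1)(j+3)(m+1)(m+3)}}\cdot\mathbf{1}(|j-m|\le i\le j+m)\,\mathbf{1}(|i-m|\le j\le i+m)\,\mathbf{1}(|i-j|\le m\le i+j)$$ $$\cdot\,\mathbf{1}(j+m-i\in2\mathbb{N}\cup\{0\})\,\mathbf{1}(i+m-j\in2\mathbb{N}\cup\{0\})\,\mathbf{1}(i+j-m\in2\mathbb{N}\cup\{0\}).$$
   Context: $\mathfrak{e}_n(x)=\mathfrak{N}_nP_n^{(3/2,3/2)}(\cos x)$ with $P_n^{(3/2,3/2)}$ the Jacobi polynomial, $\omega_n=n+2$ and $\mathfrak{N}_n=\frac{\sqrt{\omega_n\Gamma(1+n)\Gamma(4+n)}}{2\sqrt2\,\Gamma(5/2+n)}$. $\overline{\mathfrak{C}}_{ijm}=\int_0^\pi\mathfrak{e}_i\mathfrak{e}_j\mathfrak{e}_m\sin^4x\,dx$. $\mathbf{1}(\cdot)$ is the indicator of the condition. *)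

(* Defs.v *)
From Stdlib Require Import Reals ZArith Bool.
From Coquelicot Require Import Coquelicot.
Open Scope R_scope.

Fixpoint poch (a : R) (k : nat) : R :=
  match k with
  | O => 1
  | S k' => poch a k' * (a + INR k')
  end.

(* Jacobi polynomial P_n^{(a,b)}(x), standard explicit formula
   P_n^{(a,b)}(x) = 1/n! * sum_{k=0}^n C(n,k) (a+k+1)_{n-k} (a+b+n+1)_k ((x-1)/2)^k,
   equivalently Gamma(a+n+1)/(n! Gamma(a+b+n+1)) sum_k C(n,k) Gamma(a+b+n+k+1)/Gamma(a+k+1) ((x-1)/2)^k. *)
Definition jacobiP (a b : R) (n : nat) (x : R) : R :=
  / INR (fact n) *
  sum_f_R0 (fun k => Binomial.C n k * poch (a + INR k + 1) (n - k)
                     * poch (a + b + INR n + 1) k * ((x - 1) / 2) ^ k) n.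

(* Gamma at half-integers: gamma_half n = Gamma(n + 1/2),
   using Gamma(1/2) = sqrt(pi) and Gamma(s+1) = s Gamma(s). *)
Fixpoint gamma_half (n : nat) : R :=
  match n with
  | O => sqrt PI
  | S k => (INR k + / 2) * gamma_half k
  end.

Definition omega (n : nat) : R := INR n + 2.

(* N_n = sqrt(omega_n Gamma(1+n) Gamma(4+n)) / (2 sqrt 2 Gamma(5/2+n)),
   with Gamma(1+n) = n!, Gamma(4+n) = (n+3)!, Gamma(5/2+n) = gamma_half (n+2). *)
Definition normN (n : nat) : R :=
  sqrt (omega n * INR (fact n) * INR (fact (n + 3)))
  / (2 * sqrt 2 * gamma_half (n + 2)).

Definition eb (n : nat) (x : R) : R :=
  normN n * jacobiP (3/2) (3/2) n (cos x).

Definition Cbar (i j m : nat) : R :=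
  RInt (fun x => eb i x * eb j x * eb m x * (sin x) ^ 4) 0 PI.

Definition indic (b : bool) : R := if b then 1 else 0.

Definition even_nonneg (z : Z) : bool := (0 <=? z)%Z && Z.even z.

(* Main.v *)
Require Import Defs.
From Stdlib Require Import Reals ZArith Bool Lia Lra.
From Coquelicot Require Import Coquelicot.
Open Scope R_scope.

Fixpoint Cg (n : nat) (t : R) : R :=
  match n with
  | O => 1
  | S n' => match n' with
            | O => 4 * t
            | S n'' => (2 * (INR n'' + 3) * t * Cg n' t - (INR n'' + 4) * Cg n'' t) / (INR n'' + 2)
            end
  end.

Definition Cp (n : nat) (t : R) : R := match n with O => 0 | S k => Cg k t end.

Lemma INR_pos1 n : 0 < INR n + 1.
Proof. pose proof (pos_INR n); lra. Qed.

Lemma Cg_rec n t : (INR n + 1) * Cg (S n) t + (INR n + 3) * Cp n t = 2 * (INR n + 2) * t * Cg n t.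
Proof.
  destruct n as [|n].
  - simpl. ring.
  - change (Cg (S (S n)) t) with ((2 * (INR n + 3) * t * Cg (S n) t - (INR n + 4) * Cg n t) / (INR n + 2)).
    simpl Cp. rewrite S_INR. pose proof (pos_INR n). field. lra.
Qed.

Lemma Cg_cont n t : continuous (Cg n) t.
Proof.
  revert t. induction n as [n IH] using (well_founded_induction lt_wf). intros t.
  destruct n as [|[|n]].
  - apply continuous_const.
  - simpl. apply (continuous_mult (fun _ => 4) (fun y => y)). apply continuous_const. apply continuous_id.
  - change (Cg (S (S n))) with (fun t => (2 * (INR n + 3) * t * Cg (S n) t - (INR n + 4) * Cg n t) / (INR n + 2)).
    apply (continuous_mult (fun t => (2 * (INR n + 3) * t * Cg (S n) t - (INR n + 4) * Cg n t)) (fun _ => / (INR n + 2))); [|apply continuous_const].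
    apply (continuous_minus (fun t => 2 * (INR n + 3) * t * Cg (S n) t) (fun t => (INR n + 4) * Cg n t)).
    + apply (continuous_mult (fun t => 2 * (INR n + 3) * t) (Cg (S n))); [|apply IH; lia].
      apply (continuous_mult (fun t => 2 * (INR n + 3)) (fun t => t)). apply continuous_const. apply continuous_id.
    + apply (continuous_mult (fun t => (INR n + 4)) (Cg n)); [apply continuous_const|apply IH; lia].
Qed.

Definition hh (n : nat) (x : R) : R :=
  / 2 * (sin ((INR n + 2) * x) * cos x - (INR n + 2) * cos ((INR n + 2) * x) * sin x).

Lemma Cg_trig n x : sin x ^ 3 * Cg n (cos x) = hh n x.
Proof.
  unfold hh.
  cut ((sin x ^ 3 * Cg n (cos x) = / 2 * (sin ((INR n + 2) * x) * cos x - (INR n + 2) * cos ((INR n + 2) * x) * sin x)) /\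
       (sin x ^ 3 * Cg (S n) (cos x) = / 2 * (sin ((INR (S n) + 2) * x) * cos x - (INR (S n) + 2) * cos ((INR (S n) + 2) * x) * sin x))).
  { tauto. }
  induction n as [|n [IH1 IH2]].
  - simpl. replace ((0+2)*x) with (x + x) by ring. replace ((1+2)*x) with ((x + x) + x) by ring.
    repeat (rewrite sin_plus || rewrite cos_plus). split; field.
  - split; [exact IH2|].
    change (Cg (S (S n)) (cos x)) with ((2 * (INR n + 3) * cos x * Cg (S n) (cos x) - (INR n + 4) * Cg n (cos x)) / (INR n + 2)).
    assert (Hn : 0 <= INR n) by apply pos_INR.
    replace (sin x ^ 3 * ((2 * (INR n + 3) * cos x * Cg (S n) (cos x) - (INR n + 4) * Cg n (cos x)) / (INR n + 2)))
      with ((2 * (INR n + 3) * cos x * (sin x ^ 3 * Cg (S n) (cos x)) - (INR n + 4) * (sin x ^ 3 * Cg n (cos x))) / (INR n + 2))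
      by (field; lra).
    rewrite IH1, IH2. rewrite !S_INR.
    set (y := (INR n + 3) * x).
    replace ((INR n + 2) * x) with (y - x) by (unfold y; ring).
    replace ((INR n + 1 + 2) * x) with y by (unfold y; ring).
    replace ((INR n + 1 + 1 + 2) * x) with (y + x) by (unfold y; ring).
    rewrite sin_plus, cos_plus, sin_minus, cos_minus.
    field. lra.
Qed.

Lemma sin_nat_PI k : sin (INR k * PI) = 0.
Proof.
  induction k. simpl. rewrite Rmult_0_l. apply sin_0.
  rewrite S_INR, Rmult_plus_distr_r, Rmult_1_l, sin_plus, IHk, sin_PI. ring.
Qed.

Definition T (a b c : nat) : R :=
  RInt (fun x => Cg a (cos x) * Cg b (cos x) * Cg c (cos x) * sin x ^ 4) 0 PI.

Definition Fb (i : nat) (x : R) : R :=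
  match i with
  | O => / 2 * (- (sin x ^ 2 * sin (2 * x)) + 3 / 4 * (x - sin (4 * x) / 4))
  | S _ => / 2 * (- (sin x ^ 2 * sin ((INR i + 2) * x)) +
                  3 / 4 * (sin (INR i * x) / INR i - sin ((INR i + 4) * x) / (INR i + 4)))
  end.

Definition Fr (r x : R) : R :=
  / 2 * (- (sin x ^ 2 * sin ((r + 2) * x)) +
         3 / 4 * (sin (r * x) / r - sin ((r + 4) * x) / (r + 4))).

Lemma Fr_deriv r x : 0 < r -> is_derive (Fr r) x
   (sin x * (/ 2 * (sin ((r + 2) * x) * cos x - (r + 2) * cos ((r + 2) * x) * sin x))).
Proof.
  intros Hn. unfold Fr.
  auto_derive; [repeat split; lra|].
  set (y := (r + 2) * x).
  replace (r * x) with (y - (x + x)) by (unfold y; ring).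
  replace ((r + 4) * x) with (y + (x + x)) by (unfold y; ring).
  rewrite cos_minus. repeat (rewrite sin_plus || rewrite cos_plus). field_simplify; [field|lra..].
Qed.

Lemma Fb_deriv i x : is_derive (Fb i) x (sin x * hh i x).
Proof.
  unfold hh. destruct i as [|i].
  - unfold Fb. auto_derive; [auto|]. simpl INR.
    replace (4 * x) with ((x + x) + (x + x)) by ring.
    replace ((0 + 2) * x) with (x + x) by ring. replace (2 * x) with (x + x) by ring.
    repeat (rewrite sin_plus || rewrite cos_plus). pose proof (sin2_cos2 x) as H2. unfold Rsqr in H2. nra.
  - apply (is_derive_ext (Fr (INR (S i)))). { intros t. reflexivity. }
    apply Fr_deriv. apply lt_0_INR; lia.
Qed.

Lemma T_base i : T i 0 0 = if Nat.eqb i 0 then 3 * PI / 8 else 0.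
Proof.
  unfold T.
  rewrite (RInt_ext _ (fun x => sin x * hh i x)).
  2:{ intros x _. rewrite <- Cg_trig. change (Cg 0 (cos x)) with 1. match goal with |- @eq _ ?a ?b => change (@eq R a b) end. ring. }
  rewrite (is_RInt_unique _ 0 PI (minus (Fb i PI) (Fb i 0))).
  2:{ apply (is_RInt_derive (Fb i)). intros x _. apply Fb_deriv.
      intros x _. apply (@ex_derive_continuous R_AbsRing R_NormedModule (fun x => sin x * hh i x)). unfold hh. auto_derive. auto. }
  unfold minus, plus, opp; simpl.
  destruct i as [|i].
  - simpl Fb. rewrite sin_0, !Rmult_0_r, sin_0, sin_PI.
    replace (2 * PI) with (INR 2 * PI) by (simpl; ring).
    replace (4 * PI) with (INR 4 * PI) by (simpl; ring).
    rewrite !sin_nat_PI. simpl. field.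
  - simpl Nat.eqb. unfold Fb. rewrite sin_PI, !Rmult_0_r, !sin_0.
    replace ((INR (S i) + 2) * PI) with (INR (S i + 2) * PI) by (rewrite plus_INR; simpl; ring).
    replace ((INR (S i) + 4) * PI) with (INR (S i + 4) * PI) by (rewrite plus_INR; simpl; ring).
    rewrite !sin_nat_PI. field. split.
    + pose proof (pos_INR (S i)); lra.
    + apply not_0_INR; lia.
Qed.

Lemma RInt_lin3 (f1 f2 f3 : R -> R) a b (c1 c2 c3 : R) :
  ex_RInt f1 a b -> ex_RInt f2 a b -> ex_RInt f3 a b ->
  RInt (fun x => c1 * f1 x + c2 * f2 x - c3 * f3 x) a b =
  c1 * RInt f1 a b + c2 * RInt f2 a b - c3 * RInt f3 a b.
Proof.
  intros H1 H2 H3. apply is_RInt_unique.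
  apply (is_RInt_minus (fun x => c1 * f1 x + c2 * f2 x) (fun x => c3 * f3 x)).
  - apply (is_RInt_plus (fun x => c1 * f1 x) (fun x => c2 * f2 x)).
    + apply (is_RInt_scal f1). exact (@RInt_correct R_CompleteNormedModule f1 a b H1).
    + apply (is_RInt_scal f2). exact (@RInt_correct R_CompleteNormedModule f2 a b H2).
  - apply (is_RInt_scal f3). exact (@RInt_correct R_CompleteNormedModule f3 a b H3).
Qed.

Lemma RInt_scal1 (f : R -> R) a b (c : R) :
  ex_RInt f a b -> RInt (fun x => c * f x) a b = c * RInt f a b.
Proof.
  intros H. apply is_RInt_unique. apply (is_RInt_scal f). exact (@RInt_correct R_CompleteNormedModule f a b H).
Qed.

Lemma cont_cos_comp (f : R -> R) x : (forall t, continuous f t) -> continuous (fun y => f (cos y)) x.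
Proof.
  intros Hf. apply (continuous_comp cos f). 
  apply (@ex_derive_continuous R_AbsRing R_NormedModule cos). auto_derive. auto.
  apply Hf.
Qed.

Lemma ex_I3 (f g h : R -> R) :
  (forall t, continuous f t) -> (forall t, continuous g t) -> (forall t, continuous h t) ->
  ex_RInt (fun x => f (cos x) * g (cos x) * h (cos x) * sin x ^ 4) 0 PI.
Proof.
  intros Hf Hg Hh. apply (@ex_RInt_continuous R_CompleteNormedModule). intros z _.
  apply (continuous_mult (fun x => f (cos x) * g (cos x) * h (cos x)) (fun x => sin x ^ 4)).
  apply (continuous_mult (fun x => f (cos x) * g (cos x)) (fun x => h (cos x))).
  apply (continuous_mult (fun x => f (cos x)) (fun x => g (cos x))).
  all: try (apply cont_cos_comp; auto).
  apply (@ex_derive_continuous R_AbsRing R_NormedModule (fun x => sin x ^ 4)). auto_derive. auto.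
Qed.

Lemma Cp_cont n t : continuous (Cp n) t.
Proof. destruct n. apply continuous_const. apply Cg_cont. Qed.

Definition Tprev_i (i j m : nat) : R := match i with O => 0 | S k => T k j m end.
Definition Tprev_m (i j m : nat) : R := match m with O => 0 | S k => T i j k end.

Lemma Tprev_i_eq i j m : Tprev_i i j m =
  RInt (fun x => Cp i (cos x) * Cg j (cos x) * Cg m (cos x) * sin x ^ 4) 0 PI.
Proof.
  destruct i; simpl. 
  - rewrite (RInt_ext _ (fun _ => 0)). 2:{ intros; simpl; ring. }
    rewrite RInt_const. unfold scal; simpl. unfold mult; simpl. ring.
  - reflexivity.
Qed.

Lemma Tprev_m_eq i j m : Tprev_m i j m =
  RInt (fun x => Cg i (cos x) * Cg j (cos x) * Cp m (cos x) * sin x ^ 4) 0 PI.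
Proof.
  destruct m; simpl.
  - rewrite (RInt_ext _ (fun _ => 0)). 2:{ intros; simpl; ring. }
    rewrite RInt_const. unfold scal; simpl. unfold mult; simpl. ring.
  - reflexivity.
Qed.

Lemma T_rec i j m :
  (INR m + 1) * (INR i + 2) * T i j (S m) =
  (INR m + 2) * (INR i + 1) * T (S i) j m + (INR m + 2) * (INR i + 3) * Tprev_i i j m
  - (INR i + 2) * (INR m + 3) * Tprev_m i j m.
Proof.
  rewrite Tprev_i_eq, Tprev_m_eq. unfold T.
  rewrite <- RInt_scal1 by (apply ex_I3; intros; apply Cg_cont).
  rewrite <- RInt_lin3 by (apply ex_I3; intros; first [apply Cg_cont | apply Cp_cont]).
  apply RInt_ext. intros x _.
  set (t := cos x).
  pose proof (Cg_rec m t) as H1. pose proof (Cg_rec i t) as H2.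
  replace ((INR m + 1) * (INR i + 2) * (Cg i t * Cg j t * Cg (S m) t * sin x ^ 4))
    with ((INR i + 2) * Cg i t * Cg j t * sin x ^ 4 * ((INR m + 1) * Cg (S m) t)) by ring.
  replace ((INR m + 1) * Cg (S m) t) with (2 * (INR m + 2) * t * Cg m t - (INR m + 3) * Cp m t) by (rewrite <- H1; ring).
  replace (Cg (S i) t) with ((2 * (INR i + 2) * t * Cg i t - (INR i + 3) * Cp i t) / (INR i + 1))
    by (rewrite <- H2; field; pose proof (pos_INR i); lra).
  match goal with |- @eq _ ?a ?b => change (@eq R a b) end. field. pose proof (pos_INR i); lra.
Qed.

Module ZPart.
Local Open Scope Z_scope.

Definition adm (i j m : Z) : bool :=
  (0 <=? j + m - i) && (0 <=? i + m - j) && (0 <=? i + j - m) && Z.even (i + j + m).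
Definition P4 (i j m : Z) : Z := (i+j-m+2)*(i-j+m+2)*(-i+j+m+2)*(i+j+m+6).
Definition GZ (i j m : Z) : Z := if adm i j m then P4 i j m else 0.

Lemma adm_spec i j m : adm i j m = true <->
  (0 <= j + m - i /\ 0 <= i + m - j /\ 0 <= i + j - m /\ (i + j + m) mod 2 = 0).
Proof.
  unfold adm. rewrite !andb_true_iff, !Z.leb_le, Zeven_mod, Z.eqb_eq. tauto.
Qed.

Lemma adm_spec_f i j m : adm i j m = false ->
  ~ (0 <= j + m - i /\ 0 <= i + m - j /\ 0 <= i + j - m /\ (i + j + m) mod 2 = 0).
Proof. intros H H'. apply adm_spec in H'. congruence. Qed.

Ltac adm_case i j m :=
  let E := fresh "E" in
  destruct (adm i j m) eqn:E; [apply adm_spec in E | apply adm_spec_f in E].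

Lemma GZ_rec i j m : 0 <= i -> 0 <= j -> 0 <= m ->
  (m+1)*(i+2)*GZ i j (m+1) =
  (m+2)*(i+1)*GZ (i+1) j m + (m+2)*(i+3)*GZ (i-1) j m - (i+2)*(m+3)*GZ i j (m-1).
Proof.
  intros Hi Hj Hm. unfold GZ.
  adm_case i j (m+1); adm_case (i+1) j m; adm_case (i-1) j m; adm_case i j (m-1);
  unfold P4;
  Z.div_mod_to_equations;
  first [ exfalso; lia | ring
        | (assert (m = i+j+1) by lia; subst m; ring)
        | (assert (j = i+m+1) by lia; subst j; ring)
        | (assert (i = j+m+1) by lia; subst i; ring) ].
Qed.

Lemma GZ_sym i j m : GZ i j m = GZ i m j.
Proof.
  unfold GZ. adm_case i j m; adm_case i m j; unfold P4; Z.div_mod_to_equations; first [exfalso; lia | ring].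
Qed.

End ZPart.
Import ZPart.

Definition G (i j m : nat) : R := PI / 128 * IZR (GZ (Z.of_nat i) (Z.of_nat j) (Z.of_nat m)).
Definition Gprev_i (i j m : nat) : R := match i with O => 0 | S k => G k j m end.
Definition Gprev_m (i j m : nat) : R := match m with O => 0 | S k => G i j k end.

Lemma Gprev_i_eq i j m : Gprev_i i j m = PI / 128 * IZR (GZ (Z.of_nat i - 1) (Z.of_nat j) (Z.of_nat m)).
Proof.
  destruct i as [|k]; simpl Gprev_i.
  - unfold GZ. adm_case (Z.of_nat 0 - 1)%Z (Z.of_nat j) (Z.of_nat m).
    + exfalso. Z.div_mod_to_equations. lia.
    + simpl. ring.
  - unfold G. do 3 f_equal. lia.
Qed.

Lemma Gprev_m_eq i j m : Gprev_m i j m = PI / 128 * IZR (GZ (Z.of_nat i) (Z.of_nat j) (Z.of_nat m - 1)).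
Proof.
  destruct m as [|k]; simpl Gprev_m.
  - unfold GZ. adm_case (Z.of_nat i) (Z.of_nat j) (Z.of_nat 0 - 1)%Z.
    + exfalso. Z.div_mod_to_equations. lia.
    + simpl. ring.
  - unfold G. do 3 f_equal. lia.
Qed.

Lemma G_rec i j m :
  (INR m + 1) * (INR i + 2) * G i j (S m) =
  (INR m + 2) * (INR i + 1) * G (S i) j m + (INR m + 2) * (INR i + 3) * Gprev_i i j m
  - (INR i + 2) * (INR m + 3) * Gprev_m i j m.
Proof.
  rewrite Gprev_i_eq, Gprev_m_eq. unfold G.
  rewrite !Nat2Z.inj_succ, !INR_IZR_INZ.
  pose proof (GZ_rec (Z.of_nat i) (Z.of_nat j) (Z.of_nat m)) as H.
  rewrite <- !Z.add_1_r.
  assert (H' : IZR ((Z.of_nat m + 1) * (Z.of_nat i + 2) * GZ (Z.of_nat i) (Z.of_nat j) (Z.of_nat m + 1)) =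
     IZR ((Z.of_nat m + 2) * (Z.of_nat i + 1) * GZ (Z.of_nat i + 1) (Z.of_nat j) (Z.of_nat m) +
     (Z.of_nat m + 2) * (Z.of_nat i + 3) * GZ (Z.of_nat i - 1) (Z.of_nat j) (Z.of_nat m) -
     (Z.of_nat i + 2) * (Z.of_nat m + 3) * GZ (Z.of_nat i) (Z.of_nat j) (Z.of_nat m - 1))).
  { f_equal. apply H; lia. }
  rewrite !minus_IZR, !plus_IZR, !mult_IZR, !plus_IZR in H'.
  transitivity (PI / 128 * ((IZR (Z.of_nat m) + 1) * (IZR (Z.of_nat i) + 2) *
     IZR (GZ (Z.of_nat i) (Z.of_nat j) (Z.of_nat m + 1)))).
  { ring. }
  rewrite H'. ring.
Qed.

Lemma TG_step j m : (forall i, T i j m = G i j m) -> (forall i, Tprev_m i j m = Gprev_m i j m) ->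
  forall i, T i j (S m) = G i j (S m).
Proof.
  intros H1 H2 i.
  assert (H3 : Tprev_i i j m = Gprev_i i j m) by (destruct i; simpl; auto).
  pose proof (T_rec i j m) as R1. pose proof (G_rec i j m) as R2.
  rewrite H1, H2, H3 in R1. rewrite <- R2 in R1.
  apply Rmult_eq_reg_l with ((INR m + 1) * (INR i + 2)). exact R1.
  pose proof (pos_INR m); pose proof (pos_INR i). nra.
Qed.

Lemma TG_all j : (forall i, T i j 0 = G i j 0) -> forall m i, T i j m = G i j m.
Proof.
  intros H0.
  assert (forall m, (forall i, T i j m = G i j m) /\ (forall i, T i j (S m) = G i j (S m))).
  { induction m as [|m [IH1 IH2]].
    - split. exact H0. apply (TG_step j 0). exact H0. intros i. change (0 = 0). reflexivity.
    - split. exact IH2. apply (TG_step j (S m)). exact IH2. intros i. unfold Tprev_m, Gprev_m. cbv iota. exact (IH1 i). }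
  intros m; exact (proj1 (H m)).
Qed.

Lemma T_sym_0 i j : T i j 0 = T i 0 j.
Proof. unfold T. apply RInt_ext. intros x _. match goal with |- @eq _ ?a ?b => change (@eq R a b) end. simpl Cg. ring. Qed.

Lemma G_sym_0 i j : G i j 0 = G i 0 j.
Proof. unfold G. rewrite GZ_sym. reflexivity. Qed.

Lemma TG_base i : T i 0 0 = G i 0 0.
Proof.
  rewrite T_base. unfold G, GZ.
  destruct i as [|i].
  - change (3 * PI / 8 = PI / 128 * IZR 48). lra.
  - simpl Nat.eqb. adm_case (Z.of_nat (S i)) (Z.of_nat 0) (Z.of_nat 0).
    + exfalso. Z.div_mod_to_equations. lia.
    + ring.
Qed.

Theorem T_closed i j m : T i j m = G i j m.
Proof.
  apply TG_all. intros i'. rewrite T_sym_0, G_sym_0. apply (TG_all 0). exact TG_base.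
Qed.

Lemma poch_S a k : poch a (S k) = poch a k * (a + INR k).
Proof. reflexivity. Qed.

Lemma poch_add a p q : poch a (p + q) = poch a p * poch (a + INR p) q.
Proof.
  induction q.
  - rewrite Nat.add_0_r. simpl. ring.
  - rewrite Nat.add_succ_r, !poch_S, IHq, plus_INR. ring.
Qed.

Lemma poch_pos a k : 0 < a -> 0 < poch a k.
Proof.
  intros Ha. induction k. simpl; lra.
  rewrite poch_S. apply Rmult_lt_0_compat; auto. pose proof (pos_INR k); lra.
Qed.

Lemma fact_S_R k : INR (fact (S k)) = (INR k + 1) * INR (fact k).
Proof. rewrite fact_simpl, mult_INR, S_INR. reflexivity. Qed.

Lemma fact_pos k : 0 < INR (fact k).
Proof. apply lt_0_INR. apply lt_O_fact. Qed.

Definition dd (n k : nat) : R :=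
  if (k <=? n)%nat then poch 4 (n + k) / (INR (fact k) * INR (fact (n - k)) * poch (5/2) k) else 0.

Lemma dd_val n k : (k <= n)%nat -> dd n k = poch 4 (n + k) / (INR (fact k) * INR (fact (n - k)) * poch (5/2) k).
Proof. intros H. unfold dd. apply Nat.leb_le in H. rewrite H. reflexivity. Qed.

Lemma dd_zero n k : (n < k)%nat -> dd n k = 0.
Proof. intros H. unfold dd. destruct (Nat.leb_spec k n); [lia|reflexivity]. Qed.

Definition Kn (n : nat) : R := poch (5/2) n / poch 4 n.

Definition Q (n : nat) (t : R) : R := sum_f_R0 (fun k => dd n k * ((t - 1) / 2) ^ k) n.

Lemma jac_Q n t : jacobiP (3/2) (3/2) n t = Kn n * Q n t.
Proof.
  unfold jacobiP, Q, Kn.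
  rewrite !scal_sum. apply sum_eq. intros k Hk.
  rewrite dd_val by exact Hk. unfold Binomial.C.
  assert (E1 : poch (5/2) n = poch (5/2) k * poch (3/2 + INR k + 1) (n - k)).
  { replace n with (k + (n - k))%nat at 1 by lia. rewrite poch_add. f_equal. f_equal. lra. }
  assert (E2 : poch 4 (n + k) = poch 4 n * poch (3/2 + 3/2 + INR n + 1) k).
  { rewrite poch_add. f_equal. f_equal. lra. }
  rewrite E1, E2.
  pose proof (fact_pos n). pose proof (fact_pos k). pose proof (fact_pos (n - k)).
  pose proof (poch_pos (5/2) k ltac:(lra)). pose proof (poch_pos 4 n ltac:(lra)).
  pose proof (poch_pos (3/2 + INR k + 1) (n - k) ltac:(pose proof (pos_INR k); lra)).
  field. repeat split; lra.
Qed.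

Definition ee (n k : nat) : R := match k with O => 0 | S k' => dd (S n) k' end.

Ltac posfacts :=
  repeat match goal with
  | |- context [INR (fact ?k)] =>
      let H := fresh "Hf" in
      assert (H : 0 < INR (fact k)) by apply fact_pos; revert H;
      generalize (INR (fact k)); intros ? ?
  | |- context [poch (5/2) ?k] =>
      let H := fresh "Hp" in
      assert (H : 0 < poch (5/2) k) by (apply poch_pos; lra); revert H;
      generalize (poch (5/2) k); intros ? ?
  | |- context [poch 4 ?k] =>
      let H := fresh "Hp" in
      assert (H : 0 < poch 4 k) by (apply poch_pos; lra); revert H;
      generalize (poch 4 k); intros ? ?
  | |- context [INR ?k] =>
      let H := fresh "Hn" in
      assert (H : 0 <= INR k) by apply pos_INR; revert H;
      generalize (INR k); intros ? ?
  end.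

Lemma coef_id n k : (k <= S (S n))%nat ->
  (INR n + 2) * dd (S (S n)) k = 2 * (INR n + 3) * (dd (S n) k + 2 * ee n k) - (INR n + 4) * dd n k.
Proof.
  intros Hk. unfold ee.
  destruct k as [|k'].
  - rewrite !dd_val by lia. rewrite !Nat.add_0_r, !Nat.sub_0_r.
    rewrite !poch_S, !fact_S_R. simpl poch. simpl fact. rewrite !S_INR. simpl INR.
    posfacts. intros. field. lra.
  - destruct (Nat.le_gt_cases (S k') n) as [Hle|Hgt].
    + destruct (Nat.le_exists_sub (S k') n Hle) as [r [Hr _]].
      subst n.
      set (X := (r + S k' + S k')%nat).
      rewrite !dd_val by lia.
      replace (S (S (r + S k')) + S k')%nat with (S (S X)) by (unfold X; lia).
      replace (S (S (r + S k')) - S k')%nat with (S (S r)) by lia.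
      replace (S (r + S k') + S k')%nat with (S X) by (unfold X; lia).
      replace (S (r + S k') - S k')%nat with (S r) by lia.
      replace (S (r + S k') + k')%nat with X by (unfold X; lia).
      replace (S (r + S k') - k')%nat with (S (S r)) by lia.
      replace (r + S k' + S k')%nat with X by (unfold X; lia).
      replace (r + S k' - S k')%nat with r by lia.
      rewrite !poch_S, !fact_S_R.
      unfold X. repeat rewrite ?plus_INR, ?S_INR.
      posfacts. intros. field. repeat split; lra.
    + destruct (Nat.eq_dec k' n) as [E|E].
      * subst k'.
        rewrite (dd_zero n (S n)) by lia.
        rewrite !dd_val by lia.
        set (X := (S n + n)%nat).
        replace (S (S n) + S n)%nat with (S (S X)) by (unfold X; lia).
        replace (S (S n) - S n)%nat with 1%nat by lia.
        replace (S n + S n)%nat with (S X) by (unfold X; lia).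
        replace (S n - S n)%nat with 0%nat by lia.
        replace (S n - n)%nat with 1%nat by lia.
        rewrite !poch_S, !fact_S_R. simpl fact.
        unfold X. repeat rewrite ?plus_INR, ?S_INR. simpl INR.
        posfacts. intros. field. repeat split; lra.
      * assert (k' = S n) by lia. subst k'.
        rewrite (dd_zero n (S (S n))) by lia.
        rewrite (dd_zero (S n) (S (S n))) by lia.
        rewrite !dd_val by lia.
        set (X := (S n + S n)%nat).
        replace (S (S n) + S (S n))%nat with (S (S X)) by (unfold X; lia).
        replace (S (S n) - S (S n))%nat with 0%nat by lia.
        replace (S n - S n)%nat with 0%nat by lia.
        rewrite !poch_S, !fact_S_R. simpl fact.
        unfold X. repeat rewrite ?plus_INR, ?S_INR. simpl INR.
        posfacts. intros. field. repeat split; lra.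
Qed.

Lemma sum_scal_l (c : R) (g : nat -> R) N : sum_f_R0 (fun k => c * g k) N = c * sum_f_R0 g N.
Proof. rewrite scal_sum. apply sum_eq. intros; ring. Qed.

Lemma Q_ext n N t : (n <= N)%nat -> sum_f_R0 (fun k => dd n k * ((t - 1) / 2) ^ k) N = Q n t.
Proof.
  intros H. induction N.
  - assert (n = 0%nat) by lia. subst. reflexivity.
  - destruct (Nat.eq_dec n (S N)) as [E|E].
    + subst. reflexivity.
    + rewrite tech5, IHN by lia. rewrite dd_zero by lia. ring.
Qed.

Lemma Q_shift n t : (t - 1) / 2 * Q (S n) t = sum_f_R0 (fun k => ee n k * ((t - 1) / 2) ^ k) (S (S n)).
Proof.
  rewrite decomp_sum by lia. simpl pred. unfold Q.
  rewrite scal_sum. simpl ee at 1. rewrite Rmult_0_l, Rplus_0_l.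
  apply sum_eq. intros i _. simpl ee. simpl pow. ring.
Qed.

Lemma Q_rec n t : (INR n + 2) * Q (S (S n)) t =
  2 * (INR n + 3) * t * Q (S n) t - (INR n + 4) * Q n t.
Proof.
  replace (2 * (INR n + 3) * t * Q (S n) t) with
    (2 * (INR n + 3) * Q (S n) t + 2 * (INR n + 3) * 2 * ((t - 1) / 2 * Q (S n) t)) by field.
  rewrite Q_shift.
  rewrite <- (Q_ext (S n) (S (S n)) t) by lia. rewrite <- (Q_ext n (S (S n)) t) by lia.
  unfold Q.
  rewrite <- !sum_scal_l, <- plus_sum, <- minus_sum.
  apply sum_eq. intros k Hk.
  pose proof (coef_id n k Hk) as H.
  transitivity (((INR n + 2) * dd (S (S n)) k) * ((t - 1) / 2) ^ k). ring.
  rewrite H. ring.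
Qed.

Lemma Q_Cg n t : Q n t = Cg n t.
Proof.
  cut (Q n t = Cg n t /\ Q (S n) t = Cg (S n) t). tauto.
  induction n as [|n [IH1 IH2]].
  - split.
    + unfold Q. simpl sum_f_R0. rewrite dd_val by lia. simpl. field.
    + unfold Q. simpl sum_f_R0. rewrite !dd_val by lia. simpl. field.
  - split; auto.
    change (Cg (S (S n)) t) with ((2 * (INR n + 3) * t * Cg (S n) t - (INR n + 4) * Cg n t) / (INR n + 2)).
    rewrite <- IH1, <- IH2. pose proof (pos_INR n).
    apply Rmult_eq_reg_l with (INR n + 2); [|lra].
    rewrite Q_rec. field. lra.
Qed.

Lemma jac_Cg n t : jacobiP (3/2) (3/2) n t = Kn n * Cg n t.
Proof. rewrite jac_Q, Q_Cg. reflexivity. Qed.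

Lemma gamma_half_eq n : gamma_half (n + 2) = 3 / 4 * sqrt PI * poch (5/2) n.
Proof.
  induction n.
  - simpl. field.
  - replace (S n + 2)%nat with (S (n + 2)) by lia.
    change (gamma_half (S (n + 2))) with ((INR (n + 2) + / 2) * gamma_half (n + 2)).
    rewrite IHn, poch_S, plus_INR. simpl INR. field.
Qed.

Lemma fact3 n : INR (fact (n + 3)) = INR (fact n) * (INR n + 1) * (INR n + 2) * (INR n + 3).
Proof.
  replace (n + 3)%nat with (S (S (S n))) by lia.
  rewrite !fact_S_R, !S_INR. ring.
Qed.

Lemma p4_fact n : 6 * poch 4 n = INR (fact (n + 3)).
Proof.
  induction n.
  - simpl. ring.
  - rewrite poch_S. replace (S n + 3)%nat with (S (n + 3)) by lia.
    rewrite fact_S_R, <- IHn, plus_INR. simpl INR. ring.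
Qed.

Definition Mn (n : nat) : R := normN n * Kn n.

Lemma Mn_pos n : 0 < Mn n.
Proof.
  unfold Mn, normN, Kn. rewrite gamma_half_eq.
  pose proof (pos_INR n). pose proof (fact_pos n). pose proof (fact_pos (n + 3)).
  pose proof (poch_pos (5/2) n ltac:(lra)). pose proof (poch_pos 4 n ltac:(lra)).
  pose proof PI_RGT_0.
  assert (0 < sqrt (omega n * INR (fact n) * INR (fact (n + 3)))).
  { apply sqrt_lt_R0. unfold omega. apply Rmult_lt_0_compat; [apply Rmult_lt_0_compat|]; lra. }
  assert (0 < sqrt 2) by (apply sqrt_lt_R0; lra).
  assert (0 < sqrt PI) by (apply sqrt_lt_R0; lra).
  apply Rmult_lt_0_compat; apply Rdiv_lt_0_compat; try lra.
  repeat apply Rmult_lt_0_compat; lra.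
Qed.

Lemma Mn_sq n : Mn n ^ 2 = 8 / (PI * (INR n + 1) * (INR n + 3)).
Proof.
  unfold Mn, normN, Kn. rewrite gamma_half_eq.
  pose proof (pos_INR n). pose proof (fact_pos n).
  pose proof (poch_pos (5/2) n ltac:(lra)).
  pose proof PI_RGT_0.
  assert (Ep4 : poch 4 n = INR (fact n) * (INR n + 1) * (INR n + 2) * (INR n + 3) / 6).
  { pose proof (p4_fact n) as P. rewrite fact3 in P. lra. }
  rewrite Ep4, fact3. unfold omega.
  assert (HA : 0 <= (INR n + 2) * INR (fact n) * (INR (fact n) * (INR n + 1) * (INR n + 2) * (INR n + 3))).
  { apply Rmult_le_pos; [apply Rmult_le_pos|]; try lra. 
    apply Rmult_le_pos; [apply Rmult_le_pos; [apply Rmult_le_pos|]|]; lra. }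
  assert (0 < sqrt 2) by (apply sqrt_lt_R0; lra).
  assert (0 < sqrt PI) by (apply sqrt_lt_R0; lra).
  replace ((sqrt ((INR n + 2) * INR (fact n) * (INR (fact n) * (INR n + 1) * (INR n + 2) * (INR n + 3))) /
      (2 * sqrt 2 * (3 / 4 * sqrt PI * poch (5 / 2) n)) *
      (poch (5 / 2) n / (INR (fact n) * (INR n + 1) * (INR n + 2) * (INR n + 3) / 6))) ^ 2)
    with ((sqrt ((INR n + 2) * INR (fact n) * (INR (fact n) * (INR n + 1) * (INR n + 2) * (INR n + 3)))) ^ 2 * 36 /
      (((2 * 3 / 4) ^ 2 * sqrt 2 ^ 2 * sqrt PI ^ 2) * (INR (fact n) * (INR n + 1) * (INR n + 2) * (INR n + 3)) ^ 2))
    by (field; repeat split; lra).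
  rewrite !pow2_sqrt by lra.
  field. repeat split; lra.
Qed.

Lemma Cbar_T i j m : Cbar i j m = Mn i * Mn j * Mn m * T i j m.
Proof.
  unfold Cbar, T.
  rewrite <- RInt_scal1 by (apply ex_I3; intros; apply Cg_cont).
  apply RInt_ext. intros x _. unfold eb. rewrite !jac_Cg. unfold Mn.
  match goal with |- @eq _ ?a ?b => change (@eq R a b) end. ring.
Qed.

Lemma sq_inj a b : 0 < a -> 0 < b -> a ^ 2 = b ^ 2 -> a = b.
Proof.
  intros Ha Hb E. simpl in E. rewrite !Rmult_1_r in E.
  destruct (Rlt_le_dec a b) as [L|L].
  - assert (a * a < b * b) by (apply Rmult_le_0_lt_compat; lra). lra.
  - destruct (Rlt_le_dec b a) as [L2|L2].
    + assert (b * b < a * a) by (apply Rmult_le_0_lt_compat; lra). lra.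
    + lra.
Qed.

Lemma key i j m :
  Mn i * Mn j * Mn m * (PI / 128) =
  / (4 * sqrt (2 * PI * (INR i + 1) * (INR i + 3) * (INR j + 1) * (INR j + 3)
                  * (INR m + 1) * (INR m + 3))).
Proof.
  pose proof (pos_INR i). pose proof (pos_INR j). pose proof (pos_INR m). pose proof PI_RGT_0.
  assert (HD : 0 < 2 * PI * (INR i + 1) * (INR i + 3) * (INR j + 1) * (INR j + 3)
                  * (INR m + 1) * (INR m + 3)).
  { repeat (apply Rmult_lt_0_compat; [|lra]); lra. }
  pose proof (sqrt_lt_R0 _ HD).
  pose proof (Mn_pos i). pose proof (Mn_pos j). pose proof (Mn_pos m).
  apply sq_inj.
  - repeat (apply Rmult_lt_0_compat; [|lra]); lra.
  - apply Rinv_0_lt_compat. lra.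
  - rewrite !Rpow_mult_distr, !Mn_sq. rewrite pow_inv, Rpow_mult_distr, pow2_sqrt by lra.
    field. repeat split; lra.
Qed.

Lemma indic_prod (zi zj zm : Z) :
  (0 <= zi)%Z -> (0 <= zj)%Z -> (0 <= zm)%Z ->
    indic (andb (Z.abs (zj - zm) <=? zi)%Z (zi <=? zj + zm)%Z)
    * indic (andb (Z.abs (zi - zm) <=? zj)%Z (zj <=? zi + zm)%Z)
    * indic (andb (Z.abs (zi - zj) <=? zm)%Z (zm <=? zi + zj)%Z)
    * indic (even_nonneg (zj + zm - zi))
    * indic (even_nonneg (zi + zm - zj))
    * indic (even_nonneg (zi + zj - zm)) = indic (adm zi zj zm).
Proof.
  intros Hi Hj Hm. unfold even_nonneg.
  destruct (adm zi zj zm) eqn:EA; [apply adm_spec in EA | apply adm_spec_f in EA].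
  - assert (B : forall b, b = true -> indic b = 1) by (intros b Hb; rewrite Hb; reflexivity).
    rewrite !B; [ring| ..];
    rewrite ?andb_true_iff, ?Z.leb_le, ?Zeven_mod, ?Z.eqb_eq; Z.div_mod_to_equations; lia.
  - unfold indic.
    destruct ((Z.abs (zj - zm) <=? zi)%Z && (zi <=? zj + zm)%Z) eqn:E1; [|ring].
    destruct ((Z.abs (zi - zm) <=? zj)%Z && (zj <=? zi + zm)%Z) eqn:E2; [|ring].
    destruct ((Z.abs (zi - zj) <=? zm)%Z && (zm <=? zi + zj)%Z) eqn:E3; [|ring].
    destruct ((0 <=? zj + zm - zi)%Z && Z.even (zj + zm - zi)) eqn:E4; [|ring].
    destruct ((0 <=? zi + zm - zj)%Z && Z.even (zi + zm - zj)) eqn:E5; [|ring].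
    destruct ((0 <=? zi + zj - zm)%Z && Z.even (zi + zj - zm)) eqn:E6; [|ring].
    exfalso. apply EA.
    rewrite ?andb_true_iff in E1, E2, E3, E4, E5, E6.
    repeat match goal with
     | H : _ /\ _ |- _ => destruct H
     | H : (_ <=? _)%Z = true |- _ => apply Z.leb_le in H
     | H : Z.even _ = true |- _ => rewrite Zeven_mod, Z.eqb_eq in H
     end.
    Z.div_mod_to_equations. lia.
Qed.

Theorem lemma5p8 (i j m : nat) :
  let zi := Z.of_nat i in let zj := Z.of_nat j in let zm := Z.of_nat m in
  Cbar i j m =
    IZR (zi + zj - zm + 2) * IZR (zi - zj + zm + 2) * IZR (- zi + zj + zm + 2)
      * IZR (zi + zj + zm + 6)
    / (4 * sqrt (2 * PI * (INR i + 1) * (INR i + 3) * (INR j + 1) * (INR j + 3)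
                  * (INR m + 1) * (INR m + 3)))
    * indic (andb (Z.abs (zj - zm) <=? zi)%Z (zi <=? zj + zm)%Z)
    * indic (andb (Z.abs (zi - zm) <=? zj)%Z (zj <=? zi + zm)%Z)
    * indic (andb (Z.abs (zi - zj) <=? zm)%Z (zm <=? zi + zj)%Z)
    * indic (even_nonneg (zj + zm - zi))
    * indic (even_nonneg (zi + zm - zj))
    * indic (even_nonneg (zi + zj - zm)).
Proof.
  cbv zeta.
  rewrite Cbar_T, T_closed. unfold G.
  assert (P : IZR (Z.of_nat i + Z.of_nat j - Z.of_nat m + 2) * IZR (Z.of_nat i - Z.of_nat j + Z.of_nat m + 2)
              * IZR (- Z.of_nat i + Z.of_nat j + Z.of_nat m + 2) * IZR (Z.of_nat i + Z.of_nat j + Z.of_nat m + 6)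
              = IZR (P4 (Z.of_nat i) (Z.of_nat j) (Z.of_nat m))).
  { unfold P4. rewrite !mult_IZR. reflexivity. }
  rewrite P.
  match goal with |- _ = ?A * ?b1 * ?b2 * ?b3 * ?b4 * ?b5 * ?b6 =>
    transitivity (A * (b1 * b2 * b3 * b4 * b5 * b6)); [|ring] end.
  rewrite (indic_prod (Z.of_nat i) (Z.of_nat j) (Z.of_nat m)) by lia.
  unfold Rdiv at 2. rewrite <- key.
  unfold GZ, indic. destruct (adm (Z.of_nat i) (Z.of_nat j) (Z.of_nat m)); ring.
Qed.
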